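(* For every composition $I$ of $n\ge1$, the number of (type A) permutation tableaux of the shape encoded by $I$ is \[ \mathrm{PT}^A_I=\sum_{J\succeq I}(-1)^{\ell(I)-\ell(J)}\,\mathrm{Fact}(J), \] where the sum is over compositions $J$ of $n$ coarser than or equal to $I$ and $\mathrm{Fact}(j_1,\dots,j_p)=p^{j_1}(p-1)^{j_2}\cdots2^{j_{p-1}}1^{j_p}$.
   Context: A composition of $n$ is a sequence $I=(i_1,\dots,i_r)$ of positive integers with sum $n$; $\ell(I)=r$; $\mathrm{Des}(I)=\{i_1,i_1+i_2,\dots,i_1+\dots+i_{r-1}\}$; $J\succeq I$ ($J$ coarser than $I$) means $\mathrm{Des}(J)\subseteq\mathrm{Des}(I)$. Let $k\ge1$ and let $\lambda$ be a Young diagram with exactly $k$ rows (rows of length $0$ allowed) and exactly $n-k$ nonempty columns, drawn in French convention (rows left-justified, longest row at the bottom). Encode $\lambda$ by the composition $I=(i_1,\dots,i_k)$ of $n$ where, for $1\le t\le k$, $i_t-1$ is the number of columns of length $k-t+1$ (a bijection onto compositions of $n$ with $k$ parts). A (type A) permutation tableau of shape $\lambda$ is a filling of the boxes of $\lambda$ with $0$'s and $1$'s such that (1) every column contains at least one $1$, and (2) no box containing a $0$ has both a $1$ below it in the same column and a $1$ to its left in the same row. *)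

(* Defs.v *)
From mathcomp Require Import all_boot all_order all_algebra.
Set Implicit Arguments. Unset Strict Implicit. Unset Printing Implicit Defensive.
Import GRing.Theory Num.Theory.

Definition is_composition (n : nat) (J : seq nat) : bool :=
  all (fun j => 0 < j) J && (sumn J == n).

(* All sequences of length <= len with entries in {1,...,bound}, each listed once.
   Every composition of n occurs (exactly once) in [bseqs n n]. *)
Fixpoint bseqs (len bound : nat) : seq (seq nat) :=
  match len with
  | 0 => [:: [::]]
  | l.+1 => [::] :: [seq i :: s | i <- iota 1 bound, s <- bseqs l bound]
  end.

Definition Des (J : seq nat) : seq nat :=
  [seq sumn (take t J) | t <- iota 1 (size J).-1].

Definition coarser (J I : seq nat) : bool := all (fun d => d \in Des I) (Des J).

Definition Fact (J : seq nat) : nat :=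
  \prod_(t < size J) (size J - t) ^ nth 0 J t.

(* Column lengths of the Young diagram encoded by I = (i_1,...,i_k), left to right:
   (i_1 - 1) columns of length k, (i_2 - 1) of length k-1, ..., (i_k - 1) of length 1. *)
Definition colLens (I : seq nat) : seq nat :=
  flatten [seq nseq (nth 0 I t - 1) (size I - t) | t <- iota 0 (size I)].

(* A filling of the k x m rectangle (row 0 = bottom row, French convention;
   column 0 = leftmost column); box (r,c) belongs to the diagram iff r < cl_c.
   f is a permutation tableau of the shape iff
   (0) f vanishes outside the diagram (so f is just a filling of the boxes),
   (1) every column contains a 1,
   (2) no box containing 0 has both a 1 below it in its column and a 1 to its
       left in its row. *)
Definition is_PT (cl : seq nat) (k m : nat) (f : {ffun 'I_k * 'I_m -> bool}) : bool :=
  [&& [forall r : 'I_k, forall c : 'I_m, (nth 0 cl c <= r) ==> ~~ f (r, c)],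
      [forall c : 'I_m, exists r : 'I_k, (r < nth 0 cl c) && f (r, c)]
    & [forall r : 'I_k, forall c : 'I_m,
         ((r < nth 0 cl c) && ~~ f (r, c)) ==>
         ~~ ([exists r' : 'I_k, (r' < r) && f (r', c)] &&
             [exists c' : 'I_m, (c' < c) && f (r, c')])]].

Definition PT (I : seq nat) : nat :=
  #|[pred f : {ffun 'I_(size I) * 'I_(size (colLens I)) -> bool} |
       is_PT (colLens I) f]|.

(* Main.v *)
Require Import Defs.
From mathcomp Require Import all_boot all_order all_algebra zify ring.
Import GRing.Theory Num.Theory.
Set Implicit Arguments. Unset Strict Implicit. Unset Printing Implicit Defensive.

Definition PTg k m (cl : seq nat) :=
  #|[pred f : {ffun 'I_k * 'I_m -> bool} | is_PT cl f]|.

Lemma PT_PTg I : PT I = PTg (size I) (size (colLens I)) (colLens I).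
Proof. by []. Qed.

Definition okPT k m (cl : seq nat) (f : {ffun 'I_k * 'I_m -> bool}) : Prop :=
 [/\ (forall (r : 'I_k) (c : 'I_m), nth 0 cl c <= r -> f (r, c) = false),
     (forall c : 'I_m, exists2 r : 'I_k, r < nth 0 cl c & f (r, c)) &
     (forall (r : 'I_k) (c : 'I_m), r < nth 0 cl c -> f (r, c) = false ->
        forall r' : 'I_k, r' < r -> f (r', c) ->
        forall c' : 'I_m, c' < c -> f (r, c') -> False)].

Lemma is_PTP k m cl (f : {ffun 'I_k * 'I_m -> bool}) : reflect (okPT cl f) (is_PT cl f).
Proof.
apply: (iffP and3P) => [[/forallP H0 /forallP H1 /forallP H2]|[H0 H1 H2]]; split.
- move=> r c Hr; move: (H0 r) => /forallP /(_ c) /implyP /(_ Hr); by case: (f (r, c)).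
- move=> c; case/existsP: (H1 c) => r /andP [Hr Hf]; by exists r.
- move=> r c Hr Hf r' Hr' Hf' c' Hc' Hf''.
  move: (H2 r) => /forallP /(_ c) /implyP; rewrite Hr Hf => /(_ isT) /negP; apply.
  apply/andP; split; apply/existsP; [exists r' | exists c']; exact/andP.
- apply/forallP => r; apply/forallP => c; apply/implyP => Hr; by rewrite H0.
- apply/forallP => c; case: (H1 c) => r Hr Hf; apply/existsP; exists r; exact/andP.
- apply/forallP => r; apply/forallP => c; apply/implyP => /andP [Hr Hf].
  apply/negP => /andP [/existsP [r' /andP [Hr' Hf']] /existsP [c' /andP [Hc' Hf'']]].
  apply: (H2 r c Hr _ r' Hr' Hf' c' Hc' Hf''); by apply/negbTE.
Qed.

Lemma card_bij (T U : finType) (P : pred T) (Q : pred U) (f : T -> U) (g : U -> T) :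
  (forall x, P x -> Q (f x)) -> (forall y, Q y -> P (g y)) ->
  (forall x, P x -> g (f x) = x) -> (forall y, Q y -> f (g y) = y) ->
  #|P| = #|Q|.
Proof.
move=> PQ QP gf fg.
have inj : {in P &, injective f}.
  by move=> x y Hx Hy E; rewrite -(gf x Hx) -(gf y Hy) E.
rewrite -(card_in_imset inj); apply: eq_card => y.
apply/imsetP/idP => [[x Hx ->]|Hy]; first exact: PQ.
by exists (g y); [exact: QP | rewrite fg].
Qed.

Lemma PTg_zero k m cl (c : 'I_m) :
  (forall r : 'I_k, nth 0 cl c <= r) -> PTg k m cl = 0.
Proof.
move=> H; apply: eq_card0 => f /=; apply/negP => /is_PTP [_ H1 _].
by case: (H1 c) => r Hr _; move: (H r); rewrite leqNgt Hr.
Qed.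

Lemma PTg_row k m cl :
  (forall c, nth 0 cl c <= k) -> PTg k.+1 m cl = PTg k m cl.
Proof.
move=> Hcl.
pose phi (f : {ffun 'I_k.+1 * 'I_m -> bool}) : {ffun 'I_k * 'I_m -> bool} :=
  [ffun x => f (lift ord_max x.1, x.2)].
pose psi (g : {ffun 'I_k * 'I_m -> bool}) : {ffun 'I_k.+1 * 'I_m -> bool} :=
  [ffun x => if unlift ord_max x.1 is Some r then g (r, x.2) else false].
have lm (y : 'I_k) : val (lift ord_max y) = val y by rewrite /= /bump leqNgt ltn_ord.
apply: (card_bij (f := phi) (g := psi)) => /=.
- move=> f /is_PTP [H0 H1 H2]; apply/is_PTP; split.
  + move=> r c Hr; rewrite ffunE; apply: H0; by rewrite lm.
  + move=> c; case: (H1 c) => r Hr Hf.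
    case: (unliftP ord_max r) => [r' Er|Er].
      exists r'; first by rewrite -lm -Er.
      by rewrite /phi ffunE -Er.
    by move: (Hcl c); rewrite leqNgt (leq_trans _ Hr) // Er.
  + move=> r c Hr; rewrite !ffunE => Hf r' Hr'; rewrite ffunE => Hf' c' Hc'.
    rewrite ffunE => Hf''.
    by apply: (H2 _ _ _ Hf _ _ Hf' _ Hc' Hf''); rewrite ?lm.
- move=> g /is_PTP [H0 H1 H2]; apply/is_PTP; split.
  + move=> r c Hr; rewrite ffunE; case: (unliftP ord_max r) => [r' Er|//].
    by apply: H0; rewrite -lm -Er.
  + move=> c; case: (H1 c) => r Hr Hf; exists (lift ord_max r); rewrite ?lm //.
    by rewrite ffunE liftK.
  + move=> r c Hr; rewrite !ffunE => Hf r' Hr'; rewrite ffunE => Hf' c' Hc'.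
    rewrite ffunE => Hf''.
    move: Hf Hf' Hf'' Hr Hr'.
    case: (unliftP ord_max r) => [s Es|//]; case: (unliftP ord_max r') => [s' Es'|//].
    move=> Hf Hf' Hf'' Hr Hr'.
    by apply: (H2 s c _ Hf s' _ Hf' c' Hc' Hf''); rewrite -?lm -?Es -?Es'.
- move=> f /is_PTP [H0 _ _]; apply/ffunP => -[r c]; rewrite ffunE /=.
  case: (unliftP ord_max r) => [r' ->|->]; first by rewrite ffunE.
  by rewrite H0 //= Hcl.
- move=> g _; apply/ffunP => -[r c]; by rewrite !ffunE liftK.
Qed.

Lemma nth_minn k cl c : nth 0 (map (minn k) cl) c = minn k (nth 0 cl c).
Proof.
case: (ltnP c (size cl)) => h; first by rewrite (nth_map 0).
by rewrite !nth_default ?size_map //; lia.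
Qed.

Lemma ord_top k (r : 'I_k.+1) : (r == ord_max) = (nat_of_ord r == k).
Proof. by []. Qed.

Lemma topzero k m cl (f : {ffun 'I_k.+1 * 'I_m -> bool}) :
  is_PT cl f && [forall c, ~~ f (ord_max, c)] = is_PT (map (minn k) cl) f.
Proof.
have rk (r : 'I_k.+1) : r != ord_max -> r < k.
  by rewrite ord_top => /eqP; have := ltn_ord r; lia.
apply/idP/idP.
- case/andP => /is_PTP [H0 H1 H2] /forallP T; apply/is_PTP; split.
  + move=> r c; rewrite nth_minn => Hr.
    case: (eqVneq r ord_max) => [->|/rk Hrk]; first by apply/negbTE/T.
    by apply: H0; lia.
  + move=> c; case: (H1 c) => r Hr Hf; exists r => //; rewrite nth_minn.
    case: (eqVneq r ord_max) => [E|/rk Hrk]; last by lia.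
    by move: (T c); rewrite -E Hf.
  + move=> r c; rewrite nth_minn => Hr Hf r' Hr' Hf' c' Hc' Hf''.
    by apply: (H2 r c _ Hf r' Hr' Hf' c' Hc' Hf''); lia.
- move=> /is_PTP [H0 H1 H2]; apply/andP; split.
  + apply/is_PTP; split.
    * move=> r c Hr; apply: H0; rewrite nth_minn; lia.
    * move=> c; case: (H1 c) => r Hr Hf; exists r => //; move: Hr; rewrite nth_minn; lia.
    * move=> r c Hr Hf r' Hr' Hf' c' Hc' Hf''.
      case: (eqVneq r ord_max) => [E|/rk Hrk].
        by move: Hf''; rewrite E H0 // nth_minn /=; lia.
      by apply: (H2 r c _ Hf r' Hr' Hf' c' Hc' Hf''); rewrite nth_minn; lia.
  + apply/forallP => c; apply/negbT; apply: H0; rewrite nth_minn /=; lia.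
Qed.

Lemma toprowA k m cl (A : 'I_m) (f : {ffun 'I_k.+1 * 'I_m -> bool}) :
  nth 0 cl A = k.+1 -> (forall c : 'I_m, A < c -> nth 0 cl c <= k) ->
  is_PT cl f -> forall c, f (ord_max, c) -> f (ord_max, A).
Proof.
move=> HA Hc /is_PTP [H0 H1 H2] c Hf.
case: (ltngtP A c) => [Ac|cA|/val_inj -> //].
  by rewrite H0 in Hf => //=; apply: Hc.
apply/negPn/negP => /negbTE FA.
case: (H1 A) => r Hr Hfr.
have rt : r < (ord_max : 'I_k.+1).
  rewrite /=; have := ltn_ord r; case: (eqVneq (r : nat) k) => [E|]; last by lia.
  by move: Hfr; rewrite (_ : r = ord_max) ?FA //; apply: val_inj.
by apply: (H2 ord_max A _ FA r rt Hfr c cA Hf); rewrite HA /=.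
Qed.

Lemma not_top k (r : 'I_k.+1) : r != ord_max -> r < k.
Proof. by rewrite ord_top => /eqP; have := ltn_ord r; lia. Qed.

Lemma is_top k (r : 'I_k.+1) : k <= r -> r = ord_max.
Proof. by move=> h; apply: val_inj => /=; have := ltn_ord r; lia. Qed.

Lemma L4 k m cl cl4 (A : 'I_m) :
  nth 0 cl A = k.+1 -> (forall c : 'I_m, A < c -> nth 0 cl c <= k) ->
  nth 0 cl4 A = k -> (forall c : 'I_m, c != A -> nth 0 cl4 c = nth 0 cl c) ->
  #|[pred f : {ffun 'I_k.+1 * 'I_m -> bool} | is_PT cl f && f (ord_max, A) &&
       [exists r : 'I_k.+1, (r < k) && f (r, A)]]| = PTg k.+1 m cl4.
Proof.
move=> HA Hc H4A H4c.
pose phi (f : {ffun 'I_k.+1 * 'I_m -> bool}) : {ffun 'I_k.+1 * 'I_m -> bool} :=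
  [ffun x => if x == (ord_max, A) then false else f x].
pose psi (g : {ffun 'I_k.+1 * 'I_m -> bool}) : {ffun 'I_k.+1 * 'I_m -> bool} :=
  [ffun x => if x == (ord_max, A) then true else g x].
have ltA (r : 'I_k.+1) (c : 'I_m) : r < k -> ((r, c) == (ord_max, A)) = false.
  by move=> h; apply/negbTE; rewrite xpair_eqE negb_and ord_top; apply/orP; left; lia.
have neA (r : 'I_k.+1) (c : 'I_m) : c != A -> ((r, c) == (ord_max, A)) = false.
  by move=> h; apply/negbTE; rewrite xpair_eqE negb_and h orbT.
apply: (card_bij (f := phi) (g := psi)) => /=.
- move=> f /andP [/andP [/is_PTP [H0 H1 H2] FA] /existsP [r0 /andP [r0k Fr0]]].
  apply/is_PTP; split.
  + move=> r c Hr; rewrite ffunE; case: ifP => // E.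
    case: (eqVneq c A) => [EcA|ncA].
      by move: Hr E; rewrite EcA H4A => /is_top ->; rewrite eqxx.
    by apply: H0; rewrite -H4c.
  + move=> c; case: (eqVneq c A) => [->|ncA].
      by exists r0; rewrite ?H4A // ffunE ltA.
    case: (H1 c) => r Hr Hf; exists r; first by rewrite H4c.
    by rewrite ffunE neA.
  + move=> r c Hr; rewrite !ffunE => Hf r' Hr'; rewrite ffunE => Hf' c' Hc'.
    rewrite ffunE => Hf''.
    have Hr2 : r < nth 0 cl c.
      by case: (eqVneq c A) => [E|/H4c <- //]; move: Hr; rewrite E H4A HA; lia.
    have rc : ((r, c) == (ord_max, A)) = false.
      case: (eqVneq c A) => [E|/neA -> //]; apply: ltA; by move: Hr; rewrite E H4A.
    have r'c : ((r', c) == (ord_max, A)) = false.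
      apply: ltA; have := ltn_ord r; lia.
    rewrite rc in Hf; rewrite r'c in Hf'.
    move: Hf''; case: ifP => // _ Hf''.
    exact: (H2 r c Hr2 Hf r' Hr' Hf' c' Hc' Hf'').
- move=> g /is_PTP [H0 H1 H2]; apply/andP; split; first (apply/andP; split).
  + apply/is_PTP; split.
    * move=> r c Hr; rewrite ffunE; case: ifP => E.
        by move: E Hr => /eqP [-> ->]; rewrite HA /=; lia.
      case: (eqVneq c A) => [EcA|ncA].
        by move: Hr; rewrite EcA HA; have := ltn_ord r; lia.
      by apply: H0; rewrite H4c.
    * move=> c; case: (H1 c) => r Hr Hf; exists r; last by rewrite ffunE Hf; case: ifP.
      case: (eqVneq c A) => [E|/H4c <- //]; move: Hr; rewrite E H4A HA; lia.
    * move=> r c Hr; rewrite !ffunE; case: ifP => // rc Hf r' Hr'.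
      rewrite ffunE ltA; last by have := ltn_ord r; lia.
      move=> Hf' c' Hc'; rewrite ffunE; case: ifP => [/eqP [Er Ec]|rc' Hf''].
        by move: Hr; rewrite Er /=; have := Hc c; rewrite -Ec => /(_ Hc'); lia.
      have Hr2 : r < nth 0 cl4 c.
        case: (eqVneq c A) => [E|/H4c -> //]; rewrite E H4A.
        by apply: not_top; apply: contraFneq rc => ->; rewrite E.
      exact: (H2 r c Hr2 Hf r' Hr' Hf' c' Hc' Hf'').
  + by rewrite ffunE eqxx.
  + case: (H1 A) => r Hr Hf; have rk : r < k by move: Hr; rewrite H4A.
    by apply/existsP; exists r; rewrite rk /= ffunE ltA.
- move=> f /andP [/andP [_ FA] _]; apply/ffunP => x; rewrite !ffunE.
  by case: ifP => [/eqP ->|->].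
- move=> g /is_PTP [H0 _ _]; apply/ffunP => x; rewrite !ffunE.
  case: ifP => [/eqP ->|-> //]; by rewrite H0 // H4A.
Qed.

Lemma lift_lt n (h : 'I_n) (i j : 'I_n.-1) : (lift h i < lift h j) = (i < j).
Proof. by rewrite /= /bump; case: leqP; case: leqP; lia. Qed.

Lemma lift_gt_h n (h : 'I_n) (j : 'I_n.-1) : h < lift h j -> forall i : 'I_n.-1, i < j -> False -> False.
Proof. by []. Qed.

Lemma L3 k m cl cld (A : 'I_m.+1) :
  nth 0 cl A = k.+1 -> (forall c : 'I_m.+1, A < c -> nth 0 cl c <= k) ->
  (forall c : 'I_m, nth 0 cld c = nth 0 cl (lift A c)) ->
  #|[pred f : {ffun 'I_k.+1 * 'I_m.+1 -> bool} | is_PT cl f && f (ord_max, A) &&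
       [forall r : 'I_k.+1, (r < k) ==> ~~ f (r, A)]]| = PTg k.+1 m cld.
Proof.
move=> HA Hc Hd.
pose phi (f : {ffun 'I_k.+1 * 'I_m.+1 -> bool}) : {ffun 'I_k.+1 * 'I_m -> bool} :=
  [ffun x => f (x.1, lift A x.2)].
pose psi (g : {ffun 'I_k.+1 * 'I_m -> bool}) : {ffun 'I_k.+1 * 'I_m.+1 -> bool} :=
  [ffun x => if unlift A x.2 is Some c then g (x.1, c) else x.1 == ord_max].
apply: (card_bij (f := phi) (g := psi)) => /=.
- move=> f /andP [/andP [/is_PTP [H0 H1 H2] FA] _].
  apply/is_PTP; split.
  + by move=> r c Hr; rewrite ffunE /=; apply: H0; rewrite -Hd.
  + move=> c; case: (H1 (lift A c)) => r Hr Hf; exists r; first by rewrite Hd.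
    by rewrite ffunE.
  + move=> r c Hr; rewrite !ffunE => Hf r' Hr'; rewrite ffunE => Hf' c' Hc'.
    rewrite ffunE => Hf''.
    by apply: (H2 r (lift A c) _ Hf r' Hr' Hf' (lift A c') _ Hf''); rewrite -?Hd ?lift_lt.
- move=> g /is_PTP [H0 H1 H2]; apply/andP; split; first (apply/andP; split).
  + apply/is_PTP; split.
    * move=> r c Hr; rewrite ffunE /=.
      case: (unliftP A c) => [c' Ec|Ec].
        by apply: H0; rewrite Hd -Ec.
      by move: Hr; rewrite Ec HA; have := ltn_ord r; lia.
    * move=> c; case: (unliftP A c) => [c' Ec|Ec].
        case: (H1 c') => r Hr Hf; exists r; first by rewrite Ec -Hd.
        by rewrite ffunE Ec liftK.
      exists ord_max; first by rewrite Ec HA /=.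
      by rewrite ffunE Ec unlift_none.
    * move=> r c Hr; rewrite !ffunE /=.
      case: (unliftP A c) => [d Ec|Ec].
      - move=> Hf r' Hr'; rewrite ?ffunE /= => Hf' c' Hc'; rewrite ffunE /=.
        case: (unliftP A c') => [d' Ec'|Ec'].
          move=> Hf''.
          rewrite Ec liftK in Hf'.
          apply: (H2 r d _ Hf r' Hr' Hf' d' _ Hf''); first by rewrite Hd -Ec.
          by rewrite -(lift_lt A) -Ec -Ec'.
        move=> /eqP Er; move: Hr; rewrite Ec.
        have := Hc (lift A d); rewrite -Ec -Ec' => /(_ Hc').
        by rewrite Er /=; lia.
      - move=> _ r' Hr'; rewrite ffunE /= Ec unlift_none => /eqP Er'.
        by move: Hr'; rewrite Er' /=; have := ltn_ord r; lia.
  + by rewrite ffunE unlift_none.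
  + apply/forallP => r; apply/implyP => rk; rewrite ffunE unlift_none ord_top.
    by apply/negP => /eqP E; move: rk; rewrite E ltnn.
- move=> f /andP [/andP [/is_PTP [H0 H1 H2] FA] /forallP Z]; apply/ffunP => -[r c].
  rewrite ffunE /=; case: (unliftP A c) => [d ->|->]; first by rewrite ffunE.
  case: (eqVneq r ord_max) => [->|nr]; first by rewrite FA.
  by apply/esym/negbTE; move: (Z r) => /implyP; apply; apply: not_top.
- move=> g _; apply/ffunP => -[r c]; by rewrite !ffunE /= liftK.
Qed.

Lemma nth_ncat (a x : nat) (s : seq nat) c :
  nth 0 (nseq a x ++ s) c = if c < a then x else nth 0 s (c - a).
Proof. rewrite nth_cat size_nseq nth_nseq; by case: (c < a). Qed.

Lemma decomp k m A cl' : A < m.+1 -> (forall c, nth 0 cl' c <= k) ->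
  PTg k.+1 m.+1 (nseq A.+1 k.+1 ++ cl') =
    PTg k m.+1 (nseq A.+1 k ++ cl') + PTg k.+1 m (nseq A k.+1 ++ cl') +
    PTg k.+1 m.+1 (nseq A k.+1 ++ k :: cl').
Proof.
move=> HA Hcl.
set cl := nseq A.+1 k.+1 ++ cl'.
pose Ao : 'I_m.+1 := Ordinal HA.
have clA : nth 0 cl Ao = k.+1 by rewrite nth_ncat /= ltnSn.
have clc : forall c : 'I_m.+1, Ao < c -> nth 0 cl c <= k.
  by move=> c /= Hc; rewrite nth_ncat ltnNge Hc /=.
have -> : PTg k m.+1 (nseq A.+1 k ++ cl') = PTg k.+1 m.+1 (map (minn k) cl).
  rewrite -PTg_row; last by move=> c; rewrite nth_ncat; case: ifP.
  congr PTg; rewrite map_cat map_nseq; congr (nseq _ _ ++ _); first lia.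
  apply: (@eq_from_nth _ 0); rewrite ?size_map // => i _.
  by rewrite nth_minn; have := Hcl i; lia.
rewrite /PTg -(cardID [pred f : {ffun 'I_k.+1 * 'I_m.+1 -> bool} | [forall c, ~~ f (ord_max, c)]]).
rewrite -addnA; congr (_ + _).
  by apply: eq_card => f; rewrite !inE /= topzero.
have -> : #|[predD [pred f : {ffun 'I_k.+1 * 'I_m.+1 -> bool} | is_PT cl f] &
            [pred f : {ffun 'I_k.+1 * 'I_m.+1 -> bool} | [forall c, ~~ f (ord_max, c)]]]| =
          #|[pred f : {ffun 'I_k.+1 * 'I_m.+1 -> bool} | is_PT cl f && f (ord_max, Ao)]|.
  apply: eq_card => f; rewrite !inE /=; apply/andP/andP => -[H1 H2]; split => //.
    move/forallPn: H1 => [c /negPn Hc].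
    exact: (toprowA clA clc H2 Hc).
  by apply/forallPn; exists Ao; rewrite H2.
rewrite -(cardID [pred f : {ffun 'I_k.+1 * 'I_m.+1 -> bool} | [exists r : 'I_k.+1, (r < k) && f (r, Ao)]]) addnC.
congr (_ + _).
  have Hd : forall c : 'I_m, nth 0 (nseq A k.+1 ++ cl') c = nth 0 cl (lift Ao c).
    move=> c; rewrite !nth_ncat /= /bump.
    case: (ltnP c A) => h; first by rewrite add0n ltnS ltnW.
    by rewrite add1n ltnS ltnNge h /= subSS.
  have := @L3 k m cl _ Ao clA clc Hd; rewrite /PTg => <-.
  apply: eq_card => f; rewrite !inE /= andbC; congr (_ && _).
  apply/existsPn/forallP => H r; move: (H r).
    by rewrite negb_and; case: (r < k).
  by rewrite negb_and; case: (r < k).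
have H4 : forall c : 'I_m.+1, c != Ao -> nth 0 (nseq A k.+1 ++ k :: cl') c = nth 0 cl c.
  move=> c Hc; rewrite !nth_ncat.
  case: (ltngtP c A) => h.
  + by rewrite ltnS ltnW.
  + rewrite ltnS leqNgt h /=.
    by have -> : c - A = (c - A.+1).+1 by lia.
  + by move: Hc; rewrite -(inj_eq val_inj) /= h eqxx.
have H4A : nth 0 (nseq A k.+1 ++ k :: cl') Ao = k by rewrite nth_ncat /= ltnn subnn.
have := @L4 k m.+1 cl _ Ao clA clc H4A H4; rewrite /PTg => <-.
by apply: eq_card => f; rewrite !inE.
Qed.

Lemma colLens_cons i I : colLens (i :: I) = nseq (i - 1) (size I).+1 ++ colLens I.
Proof.
rewrite /colLens /=; congr (_ ++ _).
rewrite -[1%N]addn0 iotaDl -map_comp; congr flatten; by apply: eq_map => t /=.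
Qed.

Lemma colLens_le I c : nth 0 (colLens I) c <= size I.
Proof.
elim: I c => [|i I IH] c; first by rewrite nth_nil.
rewrite colLens_cons nth_ncat; case: (c < i - 1) => //=.
exact: leq_trans (IH _) (leqnSn _).
Qed.

Lemma PT1 : PT [:: 1%N] = 1%N.
Proof.
rewrite PT_PTg /=; apply: (@eq_card1 _ [ffun => false]) => f.
rewrite !inE; apply/idP/eqP => [_|_].
  by apply/ffunP => -[r []].
by apply/is_PTP; split => [r []|[]|r []].
Qed.

Lemma PT_cons1 I : I != [::] -> PT (1%N :: I) = PT I.
Proof.
move=> _; rewrite PT_PTg colLens_cons subnn /= PTg_row //; exact: colLens_le.
Qed.

Lemma PT_rec A j r :
  PT [:: A.+2, j.+1 & r] =
  (PT ((A + j).+2 :: r) + PT [:: A.+1, j.+1 & r] + PT [:: A.+1, j.+2 & r])%N.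
Proof.
rewrite !PT_PTg !colLens_cons /= !subn1 /=.
set k := (size r).+1.
set cl' := nseq j k ++ colLens r.
have Hcl : forall c, nth 0 cl' c <= k.
  move=> c; rewrite /cl' nth_ncat; case: (c < j) => //.
  exact: leq_trans (colLens_le _ _) (leqnSn _).
rewrite (@decomp k _ A cl') //; last by rewrite size_cat size_nseq ltnS leq_addr.
congr (_ + _ + _); congr PTg; rewrite /cl' ?size_cat ?size_nseq /= ?size_cat ?size_nseq; try lia.
by rewrite catA -nseqD.
Qed.

Lemma PT_single A : PT [:: A.+2] = PT [:: A.+1].
Proof.
rewrite !PT_PTg !colLens_cons /= !subn1 /= !cats0.
have D := @decomp 0 A A [::] (ltnSn A) (fun c => eq_leq (nth_nil 0 c)).
rewrite !cats0 /= in D; rewrite size_nseq D.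
rewrite (@PTg_zero 0 _ _ ord0) // (@PTg_zero 1 A.+1 _ (@Ordinal A.+1 A (ltnSn A))) //.
  by rewrite add0n addn0.
by move=> r; rewrite nth_ncat /= ltnn subnn.
Qed.

Lemma uniq_bseqs l b : uniq (bseqs l b).
Proof.
elim: l => [|l IH] //=; apply/andP; split.
  by apply/negP => /allpairsP [[x y] [_ _ /=]].
apply: allpairs_uniq => //; first exact: iota_uniq.
by move=> [x y] [x' y'] _ _ /= [-> ->].
Qed.

Lemma mem_bseqs l b J : size J <= l -> all (fun x => 0 < x <= b) J -> J \in bseqs l b.
Proof.
elim: l J => [|l IH] [|x J] //= Hs /andP [Hx HJ]; rewrite inE /=.
apply/allpairsP; exists (x, J) => /=; split => //; last exact: IH.
by rewrite mem_iota; lia.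
Qed.

Lemma Fact_cons x J : Fact (x :: J) = ((size J).+1 ^ x * Fact J)%N.
Proof. by rewrite /Fact /= big_ord_recl /= subn0. Qed.

Lemma Des_cons j J : J != [::] -> Des (j :: J) = j :: map (addn j) (Des J).
Proof.
case: J => [//|j' J] _; rewrite /Des /= -[2]/(1 + 1)%N iotaDl -map_comp /=.
rewrite addn0 -map_comp; congr (_ :: _); apply: eq_map => t /=; by rewrite add1n.
Qed.

Lemma Des_addhead i j J : Des ((i + j) :: J) = map (addn i) (Des (j :: J)).
Proof.
case: J => [//|j' J]; rewrite (Des_cons (i + j)) // (Des_cons j) //=.
rewrite -map_comp; congr (_ :: _); apply: eq_map => t /=; by rewrite addnA.
Qed.

Lemma Des_pos J : all (fun x => 0 < x) J -> all (fun d => 0 < d) (Des J).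
Proof.
case: J => [//|j J] /= /andP [Hj _]; apply/allP => d /mapP [t].
rewrite mem_iota => /andP [Ht _] ->; case: t Ht => //= t _.
by rewrite addn_gt0 Hj.
Qed.

Lemma Des_ge i I d : d \in Des (i :: I) -> i <= d.
Proof.
case: I => [//|i' I]; rewrite Des_cons // inE => /orP [/eqP -> //|/mapP [x _ ->]].
exact: leq_addr.
Qed.

Lemma Des_shift i I x : I != [::] -> 0 < x -> (i + x \in Des (i :: I)) = (x \in Des I).
Proof.
move=> HI Hx; rewrite Des_cons // inE (mem_map (@addnI i)).
have -> : (i + x == i) = false by apply/negbTE; lia.
by [].
Qed.

Lemma size_Des J : size (Des J) = (size J).-1.
Proof. by rewrite /Des size_map size_iota. Qed.

Fixpoint coars (I : seq nat) : seq (seq nat) :=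
  if I is i :: I' then
    (if I' is [::] then [:: [:: i]] else
     [seq i :: J | J <- coars I'] ++ [seq (i + head 0 J) :: behead J | J <- coars I'])
  else [:: [::]].

Notation pos := (fun x : nat => 0 < x).

Lemma sumn_pos J : all pos J -> (sumn J == 0) = (J == [::]).
Proof. by case: J => //= x J /andP [Hx _]; apply/negbTE; lia. Qed.

Lemma coarser_shift i I D : I != [::] -> all pos D ->
  all (fun d => d \in Des (i :: I)) (map (addn i) D) = all (fun d => d \in Des I) D.
Proof.
move=> HI HD; rewrite all_map; apply: eq_in_all => x Hx /=.
by rewrite Des_shift //; move/allP: HD => /(_ x Hx).
Qed.

Lemma mem_coars I : all pos I -> forall J,
  (J \in coars I) = [&& all pos J, sumn J == sumn I & coarser J I].
Proof.
elim: I => [|i I IH] /=.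
  move=> _ [|x J] //; rewrite inE /=.
  by apply/esym/negbTE; apply/negP => /and3P [/andP [h _] /eqP E _]; lia.
move=> /andP [Hi HI] J.
case: I IH HI => [|i' I''] IH HI.
  rewrite inE /=; case: J => [|x [|y J']] /=.
  - by rewrite addn0; apply/esym/negbTE; lia.
  - rewrite /coarser /Des /= !addn0 andbT.
    by apply/eqP/and3P => [[->]|[_ /eqP -> _]] //; split.
  - rewrite /coarser /Des /= !andbF; by case: eqP.
set I := i' :: I''.
have HIne : I != [::] by [].
have sI : 0 < sumn I by rewrite /I /=; move: HI => /= /andP [h _]; lia.
have Cpos : forall J', J' \in coars I -> J' != [::] /\ 0 < head 0 J'.
  move=> J'; rewrite IH // => /and3P [H1 /eqP H2 _].
  case: J' H1 H2 => [|x J'] /=; first by move=> _ E; move: sI; rewrite /I /= -E.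
  by case/andP.
rewrite mem_cat; case: J => [|j J0].
  rewrite (_ : (sumn [::] == i + sumn I) = false); last by apply/negbTE; rewrite /=; lia.
  rewrite /=; apply/negbTE; rewrite negb_or; apply/andP; split; by apply/mapP => -[].
have ci : injective (cons i) by move=> a b [].
case: (ltngtP j i) => ji.
- have -> : (j :: J0 \in [seq i :: J1 | J1 <- coars I]) = false.
    by apply/negbTE/negP => /mapP [J' _ [E _]]; lia.
  have -> : (j :: J0 \in [seq (i + head 0 J1) :: behead J1 | J1 <- coars I]) = false.
    by apply/negbTE/negP => /mapP [J' _ [E _]]; lia.
  apply/esym; apply/negbTE; apply/negP => /and3P [/andP [_ PJ0] /eqP Es Hc].
  have J0ne : J0 != [::].
    by apply/negP => /eqP E; move: Es; rewrite E /=; lia.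
  by move: Hc; rewrite /coarser (Des_cons j J0ne) /= => /andP [/Des_ge]; lia.
- have -> : (j :: J0 \in [seq i :: J1 | J1 <- coars I]) = false.
    by apply/negbTE/negP => /mapP [J' _ [E _]]; lia.
  have -> : (j :: J0 \in [seq (i + head 0 J1) :: behead J1 | J1 <- coars I]) =
            ((j - i) :: J0 \in coars I).
    apply/mapP/idP => [[J' HJ' [E1 E2]]|H].
      have [ne _] := Cpos _ HJ'; move: ne HJ' E1 E2.
      case: J' => [//|h t] _ HJ' /= E1 E2.
      by rewrite E2 (_ : j - i = h) //; lia.
    by exists ((j - i) :: J0) => //=; congr (_ :: _); lia.
  rewrite /= IH //=.
  have -> : 0 < j - i by lia.
  have -> : 0 < j by lia.
  case PJ0 : (all pos J0) => //=.
  have -> : (j - i + sumn J0 == sumn I) = (j + sumn J0 == i + sumn I).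
    by apply/eqP/eqP; lia.
  congr (_ && _).
  rewrite /coarser [Des (j :: J0)](_ : _ = map (addn i) (Des ((j - i) :: J0))).
    by rewrite coarser_shift // Des_pos //= PJ0 andbT; lia.
  by rewrite -Des_addhead subnKC // ltnW.
- subst j.
  have -> : (i :: J0 \in [seq (i + head 0 J1) :: behead J1 | J1 <- coars I]) = false.
    apply/negbTE/negP => /mapP [J' HJ' [E _]].
    by have [_ h] := Cpos _ HJ'; lia.
  rewrite orbF (mem_map ci) IH //= Hi eqn_add2l /=.
  case: (eqVneq J0 [::]) => [->|J0ne].
    by rewrite /= eq_sym (negbTE (lt0n_neq0 sI)).
  case PJ0 : (all pos J0) => //=; congr (_ && _).
  rewrite /coarser (Des_cons i J0ne) /= (_ : i \in Des (i :: I) = true) /=.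
    by rewrite coarser_shift // Des_pos.
  by rewrite (Des_cons i HIne) mem_head.
Qed.

Local Open Scope ring_scope.

Definition Tp (i : nat) (g : nat -> int) (p : nat) : int :=
  (p.+1%:Z) ^+ i * g p.+1 - (p%:Z) ^+ i * g p.

Fixpoint Rg (I : seq nat) (g : nat -> int) : int :=
  if I is i :: I' then Rg I' (Tp i g) else g 0%N.

Lemma Rg_ext I g1 g2 : (forall p, g1 p = g2 p) -> Rg I g1 = Rg I g2.
Proof.
elim: I g1 g2 => [|i I IH] g1 g2 H /=; first exact: H.
by apply: IH => p; rewrite /Tp !H.
Qed.

Lemma Rg_add I g1 g2 : Rg I (fun p => g1 p + g2 p) = Rg I g1 + Rg I g2.
Proof.
elim: I g1 g2 => [|i I IH] g1 g2 //=.
rewrite -IH; apply: Rg_ext => p; rewrite /Tp; ring.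
Qed.

Lemma test (p A j : nat) :
  Tp j.+1 (Tp A.+2 (fun _ => 1)) p =
  Tp (A + j).+2 (fun _ => 1) p + Tp j.+1 (Tp A.+1 (fun _ => 1)) p +
  Tp j.+2 (Tp A.+1 (fun _ => 1)) p.
Proof.
rewrite /Tp.
have e1 : (p.+2)%:Z = p.+1%:Z + 1 by rewrite -addn1 PoszD.
have e2 : (p.+1)%:Z = p%:Z + 1 by rewrite -addn1 PoszD.
rewrite e1 e2 !(exprS, exprD).
ring.
Qed.

Lemma Rg_single i : (0 < i)%N -> Rg [:: i] (fun _ => 1) = 1.
Proof. by case: i => // i _; rewrite /= /Tp expr1n expr0n /= mulr1 mul0r subr0. Qed.

Lemma PT_Rg I : I != [::] -> all (fun x => 0 < x)%N I -> (PT I)%:Z = Rg I (fun _ => 1).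
Proof.
move: {2}(size I) (erefl (size I)) => n.
elim: n I => [|n IHn] [|i I'] // [Hs] _ /andP [Hi HI'].
elim: i I' Hs Hi HI' => [|i IHi] I' Hs Hi HI' //.
case: i IHi Hi => [|A] IHi Hi.
  case: I' Hs HI' => [|i2 r] Hs HI'; first by rewrite PT1 Rg_single.
  rewrite PT_cons1 // IHn //=; apply: Rg_ext => p; rewrite /Tp !expr1 !mulr1.
  rewrite -addn1 PoszD; ring.
case: I' Hs HI' => [|i2 r] Hs HI'.
  by rewrite PT_single (IHi [::]) // !Rg_single.
case: i2 Hs HI' => [|j] Hs HI' //.
move: HI' => /= Hr.
rewrite PT_rec !PoszD (IHi [:: j.+1 & r]) ?(IHi [:: j.+2 & r]) //= ?Hr //.
rewrite (IHn ((A + j).+2 :: r) Hs) //= ?Hr //.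
rewrite -!Rg_add; apply: Rg_ext => p; by rewrite test.
Qed.

Lemma PoszX (a b : nat) : ((a ^ b)%N)%:Z = (a%:Z) ^+ b.
Proof. by elim: b => [|b IH] //; rewrite expnS exprS PoszM IH. Qed.

Lemma coars_size I J : J \in coars I -> (size J <= size I)%N.
Proof.
elim: I J => [|i I IH] J /=; first by rewrite inE => /eqP ->.
case: I IH => [|i' I''] IH; first by rewrite inE => /eqP ->.
rewrite mem_cat => /orP [] /mapP [J' HJ' ->] /=; have := IH _ HJ'.
  by [].
by case: J' HJ' => //= h t _ /ltnW.
Qed.

Lemma coars_ne I J : all pos I -> I != [::] -> J \in coars I ->
  exists h t, J = h :: t /\ (0 < h)%N.
Proof.
move=> HI HIne; rewrite mem_coars // => /and3P [PJ /eqP Es _].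
case: J PJ Es => [|h t] /=.
  by case: I HI HIne => //= i I /andP [Hi _] _ _ E; move: Hi; rewrite -?E; lia.
by move=> /andP [Hh _] _; exists h, t.
Qed.

Lemma uniq_coars I : all pos I -> uniq (coars I).
Proof.
elim: I => [|i I IH] //=; case: I IH => [|i' I''] IH // /andP [Hi HI].
have ci : injective (cons i) by move=> a b [].
rewrite cat_uniq (map_inj_uniq ci) IH //=; apply/andP; split.
  apply/hasPn => J /mapP [J' HJ' ->]; apply/negP => /mapP [J2 _ [E _]].
  by have [h [t [Et Hh]]] := coars_ne HI isT HJ'; move: E; rewrite Et /=; lia.
rewrite map_inj_in_uniq ?IH // => J1 J2 H1 H2.
have [h1 [t1 [-> _]]] := coars_ne HI isT H1.
have [h2 [t2 [-> _]]] := coars_ne HI isT H2.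
by move=> /= [E ->]; congr (_ :: _); lia.
Qed.

Lemma sum_coars I (g : nat -> int) : all pos I ->
  \sum_(J <- coars I) (-1) ^+ (size I - size J) * (Fact J)%:Z * g (size J) = Rg I g.
Proof.
elim: I g => [|i I IH] g.
  by move=> _; rewrite /= big_seq1 /Fact big_ord0 /= expr0 !mul1r.
case: I IH => [|i' I''] IH /andP [Hi HI].
  rewrite big_seq1 /= Fact_cons /Fact big_ord0 muln1 subnn expr0 mul1r exp1n mul1r.
  by rewrite /Tp expr1n expr0n; case: i Hi => //= i _; rewrite mul1r mul0r subr0.
transitivity (Rg (i' :: I'') (Tp i g)); last by [].
rewrite -IH //.
have -> : coars [:: i, i' & I''] = [seq i :: J | J <- coars (i' :: I'')] ++
   [seq (i + head 0 J)%N :: behead J | J <- coars (i' :: I'')] by [].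
set C := coars (i' :: I'').
rewrite big_cat /= !big_map -big_split /=; apply: eq_big_seq => J HJ.
have [h [t [Et Hh]]] := @coars_ne (i' :: I'') J HI isT HJ.
have sJ := coars_size HJ.
move: sJ; rewrite Et /= => sJ.
rewrite !Fact_cons PoszM !PoszX /Tp.
set SS := size I''.
move: sJ; set u := size t => sJ.
have -> : (SS.+2 - u.+1 = (SS.+1 - u.+1).+1)%N by lia.
rewrite /= exprS expnD !PoszM !PoszX subSS -/u. ring.
Qed.


Lemma size_le_sumn (s : seq nat) : all pos s -> (size s <= sumn s)%N.
Proof. elim: s => //= x s IH /andP [Hx Hs]; have := IH Hs; lia. Qed.

Lemma mem_le_sumn (s : seq nat) x : x \in s -> (x <= sumn s)%N.
Proof.
elim: s => //= y s IH; rewrite inE => /orP [/eqP ->|/IH]; lia.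
Qed.

Unset Implicit Arguments.

Theorem mainTheorem2 (n : nat) (I : seq nat) :
  (1 <= n)%N -> is_composition n I ->
  (PT I)%:Z =
    \sum_(J <- bseqs n n | is_composition n J && coarser J I)
      (-1) ^+ (size I - size J) * (Fact J)%:Z.
Proof.
move=> Hn /andP [HI /eqP HsI].
have Ine : I != [::] by case: I HI HsI => //= _; lia.
rewrite PT_Rg // -(sum_coars (fun _ => 1) HI) -(big_filter (bseqs n n)).
apply/esym; rewrite [RHS](eq_bigr (fun J => (-1) ^+ (size I - size J) * (Fact J)%:Z)); last by move=> J _; rewrite mulr1.
apply: perm_big.
apply: uniq_perm; [exact: filter_uniq (uniq_bseqs n n) | exact: uniq_coars |].
move=> J; rewrite mem_filter mem_coars // HsI /is_composition.
case PJ: (all pos J) => //=; case E: (sumn J == n) => //=; case: (coarser J I) => //=.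
move/eqP: E => E; apply: mem_bseqs; first by rewrite -E size_le_sumn.
apply/allP => x Hx; move/allP: PJ => /(_ x Hx) /= ->; rewrite -E.
exact: mem_le_sumn.
Qed.
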